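(* Let $e\ge 0$ and $m\ge 1$ be integers. The set of tree-decorated maps $(M,t)$ such that $M$ has $e+m$ edges, $t$ has $m$ edges, and the root edge of $M$ lies on $t$, is in bijection with the Cartesian product $\mathsf{PPT}_m\times \mathcal{S}_{e,m}$. Here $\mathcal{S}_{e,m}$ denotes the set of maps with a simple boundary of length $2m$ having $e$ interior edges, i.e. $e$ edges not on the boundary. Under this bijection, the plane-tree component is the decorating tree $t$, with the cyclic orders inherited from $M$ and rooted at the root edge of $M$.
   Context: A (rooted planar) map is a finite connected graph (loops and multiple edges allowed) embedded in the sphere, considered up to orientation-preserving homeomorphism, together with a distinguished oriented edge, the root edge. The root face is the face to the left of the root edge. A plane tree is a map with a single face; $\mathsf{PPT}_m$ denotes the set of plane trees with $m$ edges. A map with a simple boundary of length $2m$ is a rooted map whose root face (the external face) has degree $2m$ and whose boundary is a simple cycle, i.e. the $2m$ oriented edges having the external face on their left form a simple closed curve through $2m$ distinct vertices. A tree-decorated map is a pair $(M,t)$ where $M$ is a rooted map and $t$ is a subgraph of $M$ that is a tree. *)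

(* Defs.v *)
(* Rooted planar maps encoded combinatorially as rotation
   systems on a labelled dart set 'I_(2*n) (n = number of edges); statements
   are about isomorphism classes of such labelled objects. *)
From mathcomp Require Import all_boot all_fingroup.
Set Implicit Arguments. Unset Strict Implicit. Unset Printing Implicit Defensive.

Section Generic.
Variable D : finType.

(* alpha: fixed-point-free involution (pairs the two orientations of an edge) *)
Definition invol_fpf (a : {perm D}) : Prop :=
  forall x, a x != x /\ a (a x) = x.

Definition mstep (s a : {perm D}) : rel D :=
  fun x y => (y == s x) || (y == a x).

Definition mconnected (s a : {perm D}) : Prop :=
  forall x y, connect (mstep s a) x y.

(* sigma: counterclockwise rotation of darts around their origin vertex.
   Face permutation: phi x = sigma^-1 (alpha x) is the next dart of the face
   lying to the left of x (mathcomp: (p * q) x = q (p x)). *)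
Definition phi (s a : {perm D}) : {perm D} := (a * s^-1)%g.

Definition nverts (s : {perm D}) : nat := #|porbits s|.
Definition nfaces (s a : {perm D}) : nat := #|porbits (phi s a)|.
End Generic.

Record premap (n : nat) := Premap {
  sigma : {perm 'I_(2 * n)};
  alpha : {perm 'I_(2 * n)};
  root  : 'I_(2 * n) }.

(* rooted planar map with n edges: connected, genus 0 (Euler: V - E + F = 2) *)
Definition is_map n (M : premap n) : Prop :=
  [/\ invol_fpf (alpha M), mconnected (sigma M) (alpha M)
    & nverts (sigma M) + nfaces (sigma M) (alpha M) = n + 2].

Definition iso_map n (M N : premap n) : Prop :=
  exists p : {perm 'I_(2 * n)},
    [/\ forall x, p (sigma M x) = sigma N (p x),
        forall x, p (alpha M x) = alpha N (p x)
      & p (root M) = root N].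

Definition is_plane_tree n (M : premap n) : Prop :=
  is_map M /\ nfaces (sigma M) (alpha M) = 1.

Definition root_face n (M : premap n) : {set 'I_(2 * n)} :=
  porbit (phi (sigma M) (alpha M)) (root M).

(* map with a simple boundary of length 2m: root face has degree 2m, its darts
   start at pairwise distinct vertices and use pairwise distinct edges. *)
Definition is_simple_boundary_map (m : nat) n (M : premap n) : Prop :=
  [/\ is_map M, #|root_face M| = 2 * m,
      {in root_face M &, injective (fun x => porbit (sigma M) x)}
    & forall x, x \in root_face M -> alpha M x \notin root_face M].

(* tree-decorated maps: a map together with the dart set of the tree *)
Record tdmap (n : nat) := TDMap {
  tmap : premap n;
  tset : {set 'I_(2 * n)} }.

Definition tstep n (M : premap n) (T : {set 'I_(2 * n)}) : rel 'I_(2 * n) :=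
  fun x y => [&& x \in T, y \in T &
              (y == alpha M x) || (y \in porbit (sigma M) x)].

(* (M,T): M a map with n edges, T the darts of a subtree with m edges
   (connected, #vertices = #edges + 1), containing the root edge. *)
Definition valid_tdm (m : nat) n (X : tdmap n) : Prop :=
  let M := tmap X in let T := tset X in
  is_map M /\
  [/\ (forall x, x \in T -> alpha M x \in T),
      #|T| = 2 * m,
      (forall x y, x \in T -> y \in T -> connect (tstep M T) x y),
      #|[set porbit (sigma M) x | x in T]| = m + 1
    & root M \in T].

Definition iso_tdm n (X Y : tdmap n) : Prop :=
  exists p : {perm 'I_(2 * n)},
    [/\ forall x, p (sigma (tmap X) x) = sigma (tmap Y) (p x),
        forall x, p (alpha (tmap X) x) = alpha (tmap Y) (p x),
        p (root (tmap X)) = root (tmap Y)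
      & forall x, (p x \in tset Y) = (x \in tset X)].

(* P (with m edges) is the tree T of M with the cyclic orders inherited from M
   (rotation = first dart of T met when turning around the vertex in M),
   rooted at the root dart of M; g identifies the darts of P with T. *)
Definition induced_tree n m (M : premap n) (T : {set 'I_(2 * n)})
    (P : premap m) : Prop :=
  exists g : 'I_(2 * m) -> 'I_(2 * n),
    [/\ injective g,
        (forall x, x \in T <-> exists i, g i = x),
        g (root P) = root M,
        (forall i, g (alpha P i) = alpha M (g i))
      & (forall i, exists k, [/\ 0 < k, g (sigma P i) = (sigma M ^+ k)%g (g i)
           & forall j, 0 < j < k -> (sigma M ^+ j)%g (g i) \notin T])].

(* Main.v *)
Require Import Defs.
From mathcomp Require Import all_boot all_fingroup zify.
Set Implicit Arguments. Unset Strict Implicit. Unset Printing Implicit Defensive.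

Section Orb.
Variable D : finType.
Implicit Types s : {perm D}.

Lemma iter_perm_porbit s x n : iter n s x \in porbit s x.
Proof. by rewrite -permX mem_porbit. Qed.

Lemma porbit_iterP s x y :
  reflect (exists2 i, i < #|porbit s x| & y = iter i s x) (y \in porbit s x).
Proof.
apply: (iffP idP).
  by rewrite porbit_traject => /trajectP [i Hi ->]; exists i.
by case=> i _ ->; apply: iter_perm_porbit.
Qed.

Lemma porbit_iterP' s x y :
  reflect (exists i, y = iter i s x) (y \in porbit s x).
Proof.
apply: (iffP idP); first by case/porbit_iterP=> i _ ->; exists i.
by case=> i ->; apply: iter_perm_porbit.
Qed.

Lemma iter_porbit_mul s x k : iter (k * #|porbit s x|) s x = x.
Proof.
elim: k => [//|k IH]; by rewrite mulSn iterD IH iter_porbit.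
Qed.

Lemma iter_mod s x n : iter n s x = iter (n %% #|porbit s x|) s x.
Proof.
by rewrite {1}(divn_eq n #|porbit s x|) addnC iterD iter_porbit_mul.
Qed.

Lemma iter_inj_lt s x i j : i < #|porbit s x| -> j < #|porbit s x| ->
  iter i s x = iter j s x -> i = j.
Proof.
move=> Hi Hj E.
have U := uniq_traject_porbit s x.
apply/eqP; rewrite -(nth_uniq x _ _ U) ?size_traject //.
by rewrite !nth_traject // E.
Qed.

Lemma iter_perm_inv s x n : iter n s (iter n (s^-1)%g x) = x.
Proof.
elim: n x => [//|n IH] x.
by rewrite iterSr iterS permKV IH.
Qed.

Lemma permV_iter s x : exists n, (s^-1)%g x = iter n s x.
Proof.
exists (#|porbit s x|).-1.
apply: (@perm_inj _ s); rewrite permKV -iterS prednK ?iter_porbit //.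
by rewrite lt0n card_porbit_neq0.
Qed.

Lemma porbit_s s x : porbit s (s x) = porbit s x.
Proof. by rewrite -[s x]/(iter 1 s x) -permX porbit_perm. Qed.

Lemma porbit_iter s x n : porbit s (iter n s x) = porbit s x.
Proof. by rewrite -permX porbit_perm. Qed.

End Orb.

Section Orb2.
Variable D : finType.
Implicit Types s : {perm D}.
Lemma equiv_iter (D' : finType) (f : D -> D') s (s' : {perm D'}) :
  (forall x, f (s x) = s' (f x)) -> forall n x, f (iter n s x) = iter n s' (f x).
Proof. by move=> H; elim=> [//|n IH] x; rewrite !iterS H IH. Qed.

Lemma equiv_porbit (D' : finType) (f : D -> D') s (s' : {perm D'}) x :
  (forall x, f (s x) = s' (f x)) -> f @: porbit s x = porbit s' (f x).
Proof.
move=> H; apply/setP=> y; apply/imsetP/porbit_iterP'.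
  by case=> z /porbit_iterP' [n ->] ->; exists n; apply: equiv_iter.
by case=> n ->; exists (iter n s x); [apply: iter_perm_porbit | rewrite (equiv_iter H)].
Qed.

Lemma equiv_agree (D' : finType) (f g : D -> D') s (s' : {perm D'}) x :
  (forall x, f (s x) = s' (f x)) -> (forall x, g (s x) = s' (g x)) ->
  f x = g x -> forall y, y \in porbit s x -> f y = g y.
Proof.
move=> Hf Hg E y /porbit_iterP' [n ->].
by rewrite (equiv_iter Hf) (equiv_iter Hg) E.
Qed.

Lemma card_porbits_bij (D' : finType) (f : D -> D') s (s' : {perm D'}) :
  bijective f -> (forall x, f (s x) = s' (f x)) ->
  #|porbits s'| = #|porbits s|.
Proof.
move=> Hb H.
have fi : injective f by apply: bij_inj.
have -> : porbits s' = (fun A : {set D} => f @: A) @: porbits s.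
  apply/setP=> O; apply/imsetP/imsetP.
    case=> y _ ->; case: Hb => g fg gf.
    exists (porbit s (g y)); first by apply: imset_f.
    by rewrite (equiv_porbit _ H) gf.
  by case=> A /imsetP [x _ ->] ->; exists (f x) => //; rewrite (equiv_porbit _ H).
by rewrite card_imset //; apply: imset_inj.
Qed.

End Orb2.

Lemma card_porbits_union (D A B : finType) (p : {perm D}) (pa : {perm A}) (pb : {perm B})
  (i : A -> D) (j : B -> D) :
  injective i -> injective j -> (forall a b, i a != j b) ->
  (forall z, (exists a, z = i a) \/ (exists b, z = j b)) ->
  (forall a, p (i a) = i (pa a)) -> (forall b, p (j b) = j (pb b)) ->
  #|porbits p| = #|porbits pa| + #|porbits pb|.
Proof.
move=> ii ji dij cov Hi Hj.
have -> : porbits p = ((fun X : {set A} => i @: X) @: porbits pa) :|: ((fun X : {set B} => j @: X) @: porbits pb).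
  apply/setP=> O; rewrite inE; apply/imsetP/orP.
    case=> z _ ->; case: (cov z) => [[a ->]|[b ->]].
      by left; apply/imsetP; exists (porbit pa a); [apply: imset_f|rewrite (equiv_porbit _ (fun a => esym (Hi a)))].
    by right; apply/imsetP; exists (porbit pb b); [apply: imset_f|rewrite (equiv_porbit _ (fun a => esym (Hj a)))].
  case=> /imsetP [X /imsetP [x _ ->] ->].
    by exists (i x) => //; rewrite (equiv_porbit _ (fun a => esym (Hi a))).
  by exists (j x) => //; rewrite (equiv_porbit _ (fun a => esym (Hj a))).
have E0 : ((fun X : {set A} => i @: X) @: porbits pa) :&: ((fun X : {set B} => j @: X) @: porbits pb) = set0.
  apply/setP=> O; rewrite !inE; apply/negbTE/negP => /andP [/imsetP [X /imsetP [x _ ->] ->] /imsetP [Y /imsetP [y _ ->]] E].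
  have : i x \in j @: porbit pb y by rewrite -E; apply: imset_f; apply: porbit_id.
  by case/imsetP=> b _ /eqP; rewrite (negbTE (dij _ _)).
by rewrite cardsU E0 cards0 subn0 (card_imset _ (imset_inj ii)) (card_imset _ (imset_inj ji)).
Qed.


Lemma connect_exit (D : finType) (e : rel D) (U : {set D}) u z :
  connect e u z -> u \in U -> z \notin U ->
  exists x y, [/\ x \in U, y \notin U & e x y].
Proof.
case/connectP=> p; elim: p u => [|y p IH] u /=.
  by move=> _ -> ->.
case/andP=> euy py zl uU zU.
case: (boolP (y \in U)) => yU.
  exact: IH py zl yU zU.
by exists u, y.
Qed.

Section TreeFace.
Variable D : finType.
Variables s a : {perm D}.
Hypothesis Ha : invol_fpf a.
Hypothesis Hc : mconnected s a.
Variable k : nat.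
Hypothesis HD : #|D| = 2 * k.
Hypothesis HV : #|porbits s| = k.+1.

Lemma sV_closed (U : {set D}) : (forall u, u \in U -> s u \in U) ->
  forall y, y \in U -> (s^-1)%g y \in U.
Proof.
move=> HU y yU; case: (permV_iter s y) => n ->.
elim: n => [//|n IH]; by rewrite iterS HU.
Qed.

Lemma porbit_closed (U : {set D}) : (forall u, u \in U -> s u \in U) ->
  forall u y, u \in U -> y \in porbit s u -> y \in U.
Proof.
move=> HU u y uU /porbit_iterP' [n ->]; elim: n => [//|n IH]; by rewrite iterS HU.
Qed.

Definition tf_inv k' := exists (pi : {perm D}) (B U : {set D}),
  [/\ #|B| = 2 * k', #|[set porbit s u | u in U]| = k'.+1,
      (forall u, u \in U -> s u \in U), U != set0 &
      [/\ (forall x, x \in B -> x \in U), (forall x, x \in B -> a x \in B),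
          (forall x, pi x = (s^-1)%g (if x \in B then a x else x))
        & #|porbits pi| + k' = #|porbits s| ] ].

Lemma tf_base : tf_inv 0.
Proof.
have : porbits s != set0 by rewrite -card_gt0 HV.
case/set0Pn=> O /imsetP [u0 _ _].
exists (s^-1)%g, set0, (porbit s u0); split.
- by rewrite cards0.
- have -> : [set porbit s u | u in porbit s u0] = [set porbit s u0].
    apply/setP=> O'; rewrite inE; apply/imsetP/eqP.
      by case=> u /porbit_iterP' [n ->] ->; rewrite porbit_iter.
    by move=> ->; exists u0 => //; apply: porbit_id.
  by rewrite cards1.
- by move=> u Hu; rewrite porbit_sym porbit_s porbit_sym.
- by apply/set0Pn; exists u0; apply: porbit_id.
split => //; first by move=> x; rewrite inE.
  by move=> x; rewrite inE.
  by move=> x; rewrite inE.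
by rewrite addn0 porbitsV.
Qed.

Lemma tf_step k' : k' < k -> tf_inv k' -> tf_inv k'.+1.
Proof.
move=> lk [pi [B [U [HB HUc HUs HU0 [BU Ba Hpi Hcnt]]]]].
have [z zU] : exists z, z \notin U.
  apply/existsP; rewrite -negb_forall; apply/negP => /forallP HT.
  have : [set porbit s u | u in U] = porbits s.
    by apply/setP => O; apply/imsetP/imsetP => -[u Hu ->]; exists u => //; apply: HT.
  by move=> E; move: HUc; rewrite E HV => -[] Ek; move: lk; rewrite Ek ltnn.
case/set0Pn: HU0 => u0 u0U.
case: (connect_exit (Hc u0 z) u0U zU) => x [y [xU yU /orP [/eqP Ey|/eqP Ey]]].
  by move: yU; rewrite Ey HUs.
subst y.
have xB : x \notin B by apply: contra yU => /Ba /BU.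
have axB : a x \notin B by apply: contra yU => /BU.
have [nx ax2] := Ha x.
have nU : forall y, y \notin U -> pi y \notin U.
  move=> y yU'; rewrite Hpi (negbTE (contra (@BU y) yU')).
  by apply: contra yU' => /HUs; rewrite permKV.
have xO : x \notin porbit pi (a x).
  apply/negP => /porbit_iterP' [n En].
  suff : iter n pi (a x) \notin U by rewrite -En xU.
  by elim: n {En} => [//|n IH]; rewrite iterS nU.
exists (tperm x (a x) * pi)%g, (x |: (a x |: B)), (U :|: porbit s (a x)); split.
- by rewrite !cardsU1 !inE negb_or xB axB HB mulnS eq_sym nx.
- have -> : [set porbit s u | u in U :|: porbit s (a x)] =
            porbit s (a x) |: [set porbit s u | u in U].
    apply/setP => O; rewrite !inE; apply/imsetP/orP.
      case=> u; rewrite inE => /orP [uU ->|uO ->]; last by left; apply/eqP/eqP; rewrite eq_porbit_mem.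
      by right; apply: imset_f.
    case=> [/eqP ->|/imsetP [u uU ->]]; first by exists (a x) => //; rewrite inE porbit_id orbT.
    by exists u => //; rewrite inE uU.
  rewrite cardsU1 HUc.
  suff -> : (porbit s (a x) \in [set porbit s u | u in U]) = false by [].
  apply/negP => /imsetP [u uU E].
  by move: yU; rewrite (porbit_closed HUs uU (_ : a x \in porbit s u)) // -E porbit_id.
- move=> u; rewrite !inE => /orP [/HUs ->//|uO]; apply/orP; right.
  by rewrite porbit_sym porbit_s porbit_sym.
- by apply/set0Pn; exists x; rewrite inE xU.
split.
- move=> w; rewrite !inE => /or3P [/eqP ->|/eqP ->|/BU ->]; rewrite ?xU //.
  by rewrite porbit_id orbT.
- move=> w; rewrite !inE => /or3P [/eqP ->|/eqP ->|wB]; rewrite ?ax2 ?eqxx ?orbT //.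
  by rewrite (Ba _ wB) ?orbT.
- move=> w; rewrite permM !inE; case: tpermP => [->|->|wx wax].
  + by rewrite Hpi (negbTE axB) eqxx.
  + by rewrite Hpi (negbTE xB) ax2 eqxx orbT.
  + by rewrite Hpi; move/eqP: wx => /negbTE ->; move/eqP: wax => /negbTE ->.
- have := porbits_mul_tperm pi x (a x).
  rewrite /= xO /= eq_sym nx => E.
  rewrite -Hcnt; move: E => /= E; lia.
Qed.

Lemma tree_one_face : nfaces s a = 1.
Proof.
have : tf_inv k.
  have : forall k', k' <= k -> tf_inv k'.
    elim => [_|k' IH lk]; first exact: tf_base.
    by apply: tf_step => //; apply: IH; apply: ltnW.
  by apply.
case=> pi [B [U [HB _ _ _ [_ _ Hpi Hcnt]]]].
have BT : B = setT by apply/eqP; rewrite eqEcard subsetT cardsT HD HB leqnn.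
rewrite /nfaces; have -> : phi s a = pi by apply/permP => x; rewrite Hpi BT inE permM.
by apply/eqP; rewrite -(eqn_add2r k) Hcnt HV add1n.
Qed.

End TreeFace.

Lemma iter_cycle_mod (D : finType) (f : D -> D) x N n :
  iter N f x = x -> iter n f x = iter (n %% N) f x.
Proof.
move=> HN; have HK : forall q, iter (q * N) f x = x.
  by elim=> [//|q IH]; rewrite mulSn iterD IH HN.
by rewrite {1}(divn_eq n N) addnC iterD HK.
Qed.

Lemma porbitsT (D : finType) (s : {perm D}) : porbits s = porbit s @: setT.
Proof. by apply/setP=> O; apply/imsetP/imsetP => -[x _ ->]; exists x. Qed.

Lemma card_imset_le (A X Y : finType) (F1 : A -> X) (F2 : A -> Y) (S : {set A}) :
  (forall i j, F2 i = F2 j -> F1 i = F1 j) -> #|F1 @: S| <= #|F2 @: S|.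
Proof.
move=> HF; case: (set_0Vmem S) => [->|[i0 i0S]]; first by rewrite !imset0 !cards0.
pose G y := F1 (odflt i0 [pick i in S | F2 i == y]).
have -> : F1 @: S = G @: (F2 @: S).
  apply/setP=> x; apply/imsetP/imsetP.
    case=> i iS ->; exists (F2 i); first exact: imset_f.
    rewrite /G; case: pickP => [i' /andP [_ /eqP E]|/(_ i)]; first by rewrite (HF _ _ E).
    by rewrite iS eqxx.
  case=> y /imsetP [i iS ->] ->; rewrite /G; case: pickP => [i' /andP [i'S _]|_].
    by exists i'.
  by exists i0.
exact: leq_imset_card.
Qed.

Lemma card_imset_equiv (A X Y : finType) (F1 : A -> X) (F2 : A -> Y) (S : {set A}) :
  (forall i j, (F1 i == F1 j) = (F2 i == F2 j)) -> #|F1 @: S| = #|F2 @: S|.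
Proof.
move=> HF; apply/eqP; rewrite eqn_leq; apply/andP; split; apply: card_imset_le => i j E.
  by apply/eqP; rewrite HF E.
by apply/eqP; rewrite -HF E.
Qed.

Section Rel.
Variables (DM DP DS : finType).
Variables (sM aM : {perm DM}) (T : {set DM}) (sP aP : {perm DP}) (sS aS : {perm DS}).
Variables (h : DP -> DM) (io : DM -> DS) (nu : DP -> DS).

Record cutrel : Prop := CutRel {
 cr_hinj : injective h;
 cr_T : forall x, x \in T <-> exists i, h i = x;
 cr_ioinj : injective io;
 cr_nuinj : injective nu;
 cr_disj : forall y i, io y != nu i;
 cr_cov : forall z, (exists y, z = io y) \/ (exists i, z = nu i);
 cr_ha : forall i, h (aP i) = aM (h i);
 cr_first : forall i, exists k, [/\ 0 < k, h (sP i) = iter k sM (h i)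
             & forall j, 0 < j < k -> iter j sM (h i) \notin T];
 cr_aS1 : forall y, y \notin T -> aS (io y) = io (aM y);
 cr_aS2 : forall i, aS (io (h i)) = nu (aP i);
 cr_aS3 : forall i, aS (nu i) = io (h (aP i));
 cr_sS1 : forall y, sM y \notin T -> sS (io y) = io (sM y);
 cr_sS2 : forall y i, sM y = h i -> sS (io y) = nu i;
 cr_sS3 : forall i, sS (nu i) = io (h ((sP^-1)%g i)) }.

Hypothesis R : cutrel.

Lemma hT i : h i \in T.
Proof. by apply/(cr_T R); exists i. Qed.

Lemma Tcase y : y \in T -> exists i, y = h i.
Proof. by case/(cr_T R) => i <-; exists i. Qed.

Lemma aM_T y : (aM y \in T) = (y \in T).
Proof.
have sub : aM @: T \subset T.
  apply/subsetP=> z /imsetP [x xT ->]; case: (Tcase xT) => i ->.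
  rewrite -(cr_ha R); exact: hT.
have E : aM @: T = T.
  by apply/eqP; rewrite eqEcard sub (card_imset _ (@perm_inj _ aM)) leqnn.
apply/idP/idP => H.
  by move: H; rewrite -{1}E => /imsetP [x xT /perm_inj ->].
by rewrite -E; apply: imset_f.
Qed.

Lemma sS_inv_nu i : (sS^-1)%g (nu i) = io ((sM^-1)%g (h i)).
Proof. by apply: (@perm_inj _ sS); rewrite permKV (cr_sS2 R (permKV _ _)). Qed.

Lemma sS_inv_io y : y \notin T -> (sS^-1)%g (io y) = io ((sM^-1)%g y).
Proof. by move=> yT; apply: (@perm_inj _ sS); rewrite permKV cr_sS1 ?permKV. Qed.

Lemma sS_inv_ioh i : (sS^-1)%g (io (h i)) = nu (sP i).
Proof. by apply: (@perm_inj _ sS); rewrite permKV (cr_sS3 R) permK. Qed.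

Lemma phiS_io y : phi sS aS (io y) = io (phi sM aM y).
Proof.
rewrite /phi !permM.
case: (boolP (y \in T)) => yT.
  by case/Tcase: yT => i ->; rewrite (cr_aS2 R) sS_inv_nu (cr_ha R).
by rewrite (cr_aS1 R yT) sS_inv_io // aM_T.
Qed.

Lemma phiS_nu i : phi sS aS (nu i) = nu ((aP * sP)%g i).
Proof. by rewrite /phi !permM (cr_aS3 R) sS_inv_ioh. Qed.

Lemma faces_count :
  nfaces sS aS = nfaces sM aM + #|porbits (aP * sP)%g|.
Proof.
apply: (card_porbits_union (cr_ioinj R) (cr_nuinj R) (cr_disj R) (cr_cov R)).
  exact: phiS_io.
exact: phiS_nu.
Qed.

Lemma h_iter_sP i n : h (iter n sP i) \in porbit sM (h i).
Proof.
elim: n => [|n IH]; first exact: porbit_id.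
case: (cr_first R (iter n sP i)) => k [_ E _].
rewrite iterS E; move: IH; rewrite -eq_porbit_mem => /eqP <-.
exact: iter_perm_porbit.
Qed.

Lemma h_porbit_sP i j : h j \in porbit sM (h i) -> j \in porbit sP i.
Proof.
case/porbit_iterP' => N; elim: N {-2}N (leqnn N) i => [|N IH] N' HN' i.
  by move: HN'; rewrite leqn0 => /eqP -> /= /(cr_hinj R) ->; apply: porbit_id.
move=> E; case: (cr_first R i) => k [k0 Ek Hk].
case: (ltnP N' k) => lNk.
  case: (posnP N') => [N0|N0].
    by move: E; rewrite N0 /= => /(cr_hinj R) ->; apply: porbit_id.
  by move: (Hk N'); rewrite N0 lNk -E hT => /(_ isT).
have E' : h j = iter (N' - k) sM (h (sP i)) by rewrite Ek -iterD subnK.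
have : j \in porbit sP (sP i) by apply: (IH (N' - k)) => //; lia.
by rewrite porbit_s.
Qed.

Lemma porbit_h_equiv i j :
  (porbit sM (h i) == porbit sM (h j)) = (porbit sP i == porbit sP j).
Proof.
rewrite !eq_porbit_mem; apply/idP/idP.
  by rewrite porbit_sym => /h_porbit_sP; rewrite porbit_sym.
by case/porbit_iterP' => n ->; apply: h_iter_sP.
Qed.

Lemma VP_VT : #|porbits sP| = #|[set porbit sM x | x in T]|.
Proof.
have -> : [set porbit sM x | x in T] = [set porbit sM (h i) | i in [set: DP]].
  apply/setP=> O; apply/imsetP/imsetP.
    by case=> x /Tcase [i ->] ->; exists i.
  by case=> i _ ->; exists (h i) => //; apply: hT.
rewrite porbitsT; symmetry; apply: card_imset_equiv => i j; exact: porbit_h_equiv.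
Qed.

Section Sector.
Variable i : DP.
Variable k : nat.
Hypothesis k0 : 0 < k.
Hypothesis Ek : h (sP i) = iter k sM (h i).
Hypothesis Hk : forall j, 0 < j < k -> iter j sM (h i) \notin T.

Lemma sector_lt j : j < k -> iter j sS (io (h i)) = io (iter j sM (h i)).
Proof.
elim: j => [//|j IH] lj; rewrite iterS IH ?(ltnW lj) // (cr_sS1 R) // -iterS.
by apply: Hk; rewrite lj.
Qed.

Lemma sector_k : iter k sS (io (h i)) = nu (sP i).
Proof.
case: k k0 Ek Hk sector_lt => [//|k'] _ Ek' _ Hlt.
rewrite iterS Hlt //; apply: (cr_sS2 R); by rewrite -iterS Ek'.
Qed.

Lemma sector_cycle : iter k.+1 sS (io (h i)) = io (h i).
Proof. by rewrite iterS sector_k (cr_sS3 R) permK. Qed.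

Lemma sector_unique i' : io (h i') \in porbit sS (io (h i)) -> i' = i.
Proof.
case/porbit_iterP' => n; rewrite (iter_cycle_mod n sector_cycle).
have : n %% k.+1 <= k by rewrite -ltnS ltn_mod.
rewrite leq_eqVlt => /orP [/eqP ->|lt]; first by rewrite sector_k => /eqP; rewrite (negbTE (cr_disj R _ _)).
rewrite sector_lt // => /(cr_ioinj R) E.
case: (posnP (n %% k.+1)) => [Z|P].
  by move: E; rewrite Z /= => /(cr_hinj R).
have : 0 < n %% k.+1 < k by rewrite P lt.
by move/Hk; rewrite -E hT.
Qed.

End Sector.

Lemma orbit_unique_tree i i' : io (h i') \in porbit sS (io (h i)) -> i' = i.
Proof.
by case: (cr_first R i) => k [k0 Ek Hk]; apply: (sector_unique k0 Ek Hk).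
Qed.

Lemma free_iter y : (forall x, x \in porbit sM y -> x \notin T) ->
  forall n, iter n sS (io y) = io (iter n sM y).
Proof.
move=> Hf; elim=> [//|n IH]; rewrite iterS IH (cr_sS1 R) // -iterS.
by apply: Hf; apply: iter_perm_porbit.
Qed.

Lemma free_porbit y : (forall x, x \in porbit sM y -> x \notin T) ->
  porbit sS (io y) = io @: porbit sM y.
Proof.
move=> Hf; apply/setP=> z; apply/porbit_iterP'/imsetP.
  by case=> n ->; rewrite free_iter //; exists (iter n sM y) => //; apply: iter_perm_porbit.
by case=> x /porbit_iterP' [n ->] ->; exists n; rewrite free_iter.
Qed.

Lemma vertex_count :
  #|porbits sS| + #|[set porbit sM x | x in T]| = #|DP| + #|porbits sM|.
Proof.
set OT := [set porbit sM x | x in T].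
pose free y := [forall x in porbit sM y, x \notin T].
have freeP y : reflect (forall x, x \in porbit sM y -> x \notin T) (free y).
  by apply: (iffP forall_inP).
have nfree y : ~~ free y -> exists x, (x \in porbit sM y) && (x \in T).
  rewrite /free negb_forall => /existsP [x]; rewrite negb_imply negbK => H.
  by exists x.
set Of := [set porbit sM y | y in DM & free y].
have split : #|porbits sM| = #|OT| + #|Of|.
  have -> : porbits sM = OT :|: Of.
    apply/setP=> O; rewrite inE; apply/imsetP/orP.
      case=> y _ ->; case: (boolP (free y)) => fy.
        by right; apply/imsetP; exists y => //; rewrite inE.
      left; apply/imsetP; case: (nfree y fy) => x /andP [xo xT].
      by exists x => //; apply/eqP; rewrite eq_sym eq_porbit_mem.
    by case=> /imsetP [x _ ->]; exists x.
  rewrite cardsU; suff -> : OT :&: Of = set0 by rewrite cards0 subn0.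
  apply/setP=> O; rewrite !inE; apply/negbTE/negP => /andP [/imsetP [x xT ->] /imsetP [y]].
  rewrite inE => /freeP fy /eqP; rewrite eq_porbit_mem => xy.
  by move: (fy x xy); rewrite xT.
set SA := [set porbit sS (io (h i)) | i in DP].
set SB := (fun O : {set DM} => io @: O) @: Of.
have HSA : #|SA| = #|DP|.
  rewrite card_in_imset // => i j _ _ E; apply: (@orbit_unique_tree j i).
  by rewrite -E porbit_id.
have HSB : #|SB| = #|Of| by rewrite card_imset //; apply: imset_inj; apply: (cr_ioinj R).
have -> : porbits sS = SA :|: SB.
  apply/setP=> O; rewrite inE; apply/imsetP/orP.
    case=> z _ ->; case: (cr_cov R z) => [[y ->]|[i ->]]; last first.
      left; apply/imsetP; exists ((sP^-1)%g i) => //.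
      by rewrite -(cr_sS3 R) porbit_s.
    case: (boolP (free y)) => fy.
      right; apply/imsetP; exists (porbit sM y); first by apply/imsetP; exists y; rewrite ?inE.
      by apply: free_porbit; apply/freeP.
    left; case: (nfree y fy) => x /andP [xo xT].
    case/porbit_iterP': xo => n; elim: n y {fy} => [|n IH] y E.
      by rewrite /= in E; subst x; case/Tcase: xT => i ->; apply: imset_f.
    case: (boolP (sM y \in T)) => syT.
      case/Tcase: syT => i Ei; rewrite -porbit_s (cr_sS2 R Ei) -porbit_s (cr_sS3 R).
      by apply: imset_f.
    by rewrite -porbit_s (cr_sS1 R syT); apply: IH; rewrite E iterSr.
  case=> [/imsetP [i _ ->]|/imsetP [O' /imsetP [y yf ->] ->]].
    by exists (io (h i)).
  rewrite inE in yf.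
  by exists (io y) => //; rewrite free_porbit //; apply/freeP.
rewrite cardsU.
have -> : SA :&: SB = set0.
  apply/setP=> O; rewrite !inE; apply/negbTE/negP => /andP [/imsetP [i _ ->] /imsetP [O' /imsetP [y yf ->]]].
  rewrite inE in yf; rewrite -free_porbit; last by apply/freeP.
  move/eqP; rewrite eq_porbit_mem => /porbit_iterP' [n].
  rewrite free_iter; last by apply/freeP.
  move/(cr_ioinj R) => E; move/freeP: yf => /(_ (iter n sM y) (iter_perm_porbit _ _ _)).
  by rewrite -E hT.
rewrite cards0 subn0 HSA HSB split; lia.
Qed.

End Rel.

Section Conn.
Variable D : finType.
Variables s a : {perm D}.
Local Notation cc := (connect (mstep s a)).

Lemma cc_s x : cc x (s x).
Proof. by apply: connect1; rewrite /mstep eqxx. Qed.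

Lemma cc_a x : cc x (a x).
Proof. by apply: connect1; rewrite /mstep eqxx orbT. Qed.

Lemma cc_iter_s n x : cc x (iter n s x).
Proof. elim: n => [|n IH]; [exact: connect0 | exact: connect_trans IH (cc_s _)]. Qed.

Lemma cc_iter_a n x : cc x (iter n a x).
Proof. elim: n => [|n IH]; [exact: connect0 | exact: connect_trans IH (cc_a _)]. Qed.

Lemma cc_sV x : cc x ((s^-1)%g x).
Proof. by case: (permV_iter s x) => n ->; apply: cc_iter_s. Qed.

Lemma cc_aV x : cc x ((a^-1)%g x).
Proof. by case: (permV_iter a x) => n ->; apply: cc_iter_a. Qed.

Lemma cc_sym x y : cc x y -> cc y x.
Proof.
case/connectP => p; elim: p x => [|z p IH] x /=; first by move=> _ ->.
case/andP => /orP [/eqP E|/eqP E] pz yl; apply: connect_trans (IH _ pz yl) _.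
  by rewrite E; rewrite -{2}(permK s x); apply: cc_sV.
by rewrite E; rewrite -{2}(permK a x); apply: cc_aV.
Qed.

Lemma cc_phi x : cc x (phi s a x).
Proof. by rewrite /phi permM; apply: connect_trans (cc_a x) (cc_sV _). Qed.

End Conn.

Definition tstep' (D : finType) (sM aM : {perm D}) (T : {set D}) : rel D :=
  fun x y => [&& x \in T, y \in T & (y == aM x) || (y \in porbit sM x)].

Lemma tstepE n (M : premap n) T : tstep M T = tstep' (sigma M) (alpha M) T.
Proof. by []. Qed.

Section RelD.
Variables (DM DP DS : finType).
Variables (sM aM : {perm DM}) (T : {set DM}) (sP aP : {perm DP}) (sS aS : {perm DS}).
Variables (h : DP -> DM) (io : DM -> DS) (nu : DP -> DS).
Hypothesis R : cutrel sM aM T sP aP sS aS h io nu.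

Lemma single_orbit (D : finType) (c : {perm D}) i j :
  #|porbits c| = 1 -> j \in porbit c i.
Proof.
move=> H; rewrite -eq_porbit_mem; apply/eqP.
move/eqP: H => /cards1P [O EO].
have : porbit c j \in porbits c by apply: imset_f.
have : porbit c i \in porbits c by apply: imset_f.
by rewrite EO !inE => /eqP -> /eqP ->.
Qed.

Lemma conn_cut : mconnected sM aM -> #|porbits (aP * sP)%g| = 1 -> mconnected sS aS.
Proof.
move=> HM H1.
pose Sc := connect (mstep sS aS).
have nn : forall i j, Sc (nu i) (nu j).
  move=> i j; case/porbit_iterP': (single_orbit i j H1) => n ->.
  elim: n => [|n IH]; first exact: connect0.
  apply: connect_trans IH _; rewrite iterS -(phiS_nu R); exact: cc_phi.
have hn : forall i j, Sc (io (h i)) (nu j).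
  move=> i j; apply: connect_trans (nn (aP i) j); rewrite -(cr_aS2 R); exact: cc_a.
have nh : forall i j, Sc (nu j) (io (h i)) by move=> i j; apply: cc_sym; apply: hn.
have step : forall y y', mstep sM aM y y' -> Sc (io y) (io y').
  move=> y y' /orP [/eqP ->|/eqP ->].
    case: (boolP (sM y \in T)) => syT.
      case: (Tcase R syT) => i Ei; rewrite Ei.
      apply: connect_trans (nh i i); rewrite -(cr_sS2 R Ei); exact: cc_s.
    by rewrite -(cr_sS1 R syT); exact: cc_s.
  case: (boolP (y \in T)) => yT.
    by case: (Tcase R yT) => i ->; rewrite -(cr_ha R); apply: connect_trans (hn i i) (nh _ _).
  by rewrite -(cr_aS1 R yT); exact: cc_a.
have io_conn : forall y y', Sc (io y) (io y').
  move=> y y'; case/connectP: (HM y y') => p; elim: p y => [|z p IH] y /=.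
    by move=> _ ->; exact: connect0.
  by case/andP => st pz yl; apply: connect_trans (step _ _ st) (IH _ pz yl).
have [i0 _] : exists i0 : DP, true.
  move/eqP: (H1) => /cards1P [O EO]; have : O \in porbits (aP * sP)%g by rewrite EO set11.
  by case/imsetP=> i _ _; exists i.
have toroot : forall z, Sc z (nu i0).
  move=> z; case: (cr_cov R z) => [[y ->]|[i ->]]; last exact: nn.
  by apply: connect_trans (io_conn y (h i0)) (hn _ _).
by move=> z w; apply: connect_trans (toroot z) (cc_sym (toroot w)).
Qed.

Lemma conn_glue : mconnected sS aS -> mconnected sM aM.
Proof.
move=> HS.
pose Mc := connect (mstep sM aM).
pose rel_ z y := (z == io y) || [exists i, (z == nu i) && (y == h i)].
have st : forall z w y, mstep sS aS z w -> rel_ z y -> exists2 y', rel_ w y' & Mc y y'.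
  move=> z w y /orP [/eqP ->|/eqP ->] /orP [/eqP ->|/existsP [i /andP [/eqP -> /eqP ->]]].
  - case: (boolP (sM y \in T)) => syT.
      case: (Tcase R syT) => i Ei; exists (h i); last by rewrite -Ei; exact: cc_s.
      by rewrite /rel_ (cr_sS2 R Ei); apply/orP; right; apply/existsP; exists i; rewrite !eqxx.
    by exists (sM y); [rewrite /rel_ (cr_sS1 R syT) eqxx | exact: cc_s].
  - exists (h ((sP^-1)%g i)); first by rewrite /rel_ (cr_sS3 R) eqxx.
    apply: cc_sym; case: (cr_first R ((sP^-1)%g i)) => k [_ Ek _].
    by rewrite permKV in Ek; rewrite Ek; apply: cc_iter_s.
  - case: (boolP (y \in T)) => yT.
      case: (Tcase R yT) => i ->; exists (h (aP i)).
        by rewrite /rel_ (cr_aS2 R); apply/orP; right; apply/existsP; exists (aP i); rewrite !eqxx.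
      by rewrite (cr_ha R); exact: cc_a.
    by exists (aM y); [rewrite /rel_ (cr_aS1 R yT) eqxx | exact: cc_a].
  - exists (h (aP i)); first by rewrite /rel_ (cr_aS3 R) eqxx.
    by rewrite (cr_ha R); exact: cc_a.
move=> y y'; case/connectP: (HS (io y) (io y')) => p.
have gen : forall p z y0, rel_ z y0 -> Mc y y0 -> path (mstep sS aS) z p ->
    io y' = last z p -> Mc y y'.
  elim => [|w q IH] z y0 Hr Hc /=.
    move=> _ E; move: Hr; rewrite /rel_ -E => /orP [/eqP /(cr_ioinj R) -> //|].
    by case/existsP=> i /andP [/eqP E' _]; move: (cr_disj R y' i); rewrite E' eqxx.
  case/andP=> sw pw yl; case: (st _ _ _ sw Hr) => y1 r1 c1.
  exact: (IH w y1 r1 (connect_trans Hc c1) pw yl).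
apply: (gen p (io y) y) => //; [by rewrite /rel_ eqxx | exact: connect0].
Qed.

Lemma P_conn_of_T :
  (forall x y, x \in T -> y \in T -> connect (tstep' sM aM T) x y) -> mconnected sP aP.
Proof.
move=> HT i j.
have : connect (tstep' sM aM T) (h i) (h j) by apply: HT; apply: (hT R).
case/connectP => p; elim: p i => [|w p IH] i /=.
  by move=> _ /(cr_hinj R) ->; exact: connect0.
case/andP => /and3P [_ wT /orP [/eqP Ew|wo]] pw yl; case: (Tcase R wT) => i' Ei'; subst w.
  rewrite Ei' in pw yl; apply: (connect_trans _ (IH _ pw yl)); rewrite -(cr_ha R) in Ei'.
  by rewrite -((cr_hinj R) _ _ Ei'); exact: cc_a.
apply: (connect_trans _ (IH _ pw yl)).
by case/porbit_iterP': (h_porbit_sP R wo) => n ->; apply: cc_iter_s.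
Qed.

Lemma T_conn_of_P : mconnected sP aP ->
  forall x y, x \in T -> y \in T -> connect (tstep' sM aM T) x y.
Proof.
move=> HP x y /(Tcase R) [i ->] /(Tcase R) [j ->].
case/connectP: (HP i j) => p; elim: p i => [|w p IH] i /=; first by move=> _ ->; exact: connect0.
case/andP => st pw yl; apply: (connect_trans _ (IH _ pw yl)).
apply: connect1; rewrite /tstep' !(hT R) /=.
case/orP: st => /eqP ->; last by rewrite (cr_ha R) eqxx.
by rewrite (h_iter_sP R i 1) orbT.
Qed.

Lemma invP_of_M : invol_fpf aM -> invol_fpf aP.
Proof.
move=> HM i; case: (HM (h i)) => nf inv; split.
  by apply: contra nf => /eqP E; rewrite -(cr_ha R) E.
by apply: (cr_hinj R); rewrite !(cr_ha R).
Qed.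

Lemma invS_of_M : invol_fpf aM -> invol_fpf aS.
Proof.
move=> HM; have HP := invP_of_M HM.
move=> z; case: (cr_cov R z) => [[y ->]|[i ->]].
  case: (boolP (y \in T)) => yT.
    case: (Tcase R yT) => i ->; rewrite (cr_aS2 R) (cr_aS3 R); case: (HP i) => _ ->.
    by rewrite eq_sym (cr_disj R).
  rewrite (cr_aS1 R yT) (cr_aS1 R); last by rewrite (aM_T R).
  case: (HM y) => nf ->; split => //; apply: contra nf => /eqP /(cr_ioinj R) ->; done.
rewrite (cr_aS3 R) (cr_aS2 R); case: (HP i) => _ ->; split => //.
by rewrite (cr_disj R).
Qed.

Lemma invM_of_SP : invol_fpf aS -> invol_fpf aP -> invol_fpf aM.
Proof.
move=> HS HP y; case: (boolP (y \in T)) => yT.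
  case: (Tcase R yT) => i ->; rewrite -!(cr_ha R); case: (HP i) => nf inv; split.
    by apply: contra nf => /eqP /(cr_hinj R) ->.
  by rewrite inv.
have ayT : aM y \notin T by rewrite (aM_T R).
case: (HS (io y)) => nf inv; rewrite (cr_aS1 R yT) in nf inv.
rewrite (cr_aS1 R ayT) in inv; split.
  by apply: contra nf => /eqP ->.
exact: (cr_ioinj R).
Qed.

Lemma hole_orbit : #|porbits (aP * sP)%g| = 1 ->
  forall i, porbit (phi sS aS) (nu i) = nu @: setT.
Proof.
move=> H1 i; rewrite -(equiv_porbit _ (fun x => esym (phiS_nu R x))).
have -> : porbit (aP * sP)%g i = setT by apply/setP => j; rewrite inE single_orbit.
done.
Qed.

Lemma hole_simple i j : porbit sS (nu i) = porbit sS (nu j) -> i = j.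
Proof.
rewrite -porbit_s (cr_sS3 R) -[in RHS]porbit_s (cr_sS3 R) => E.
have : io (h ((sP^-1)%g j)) \in porbit sS (io (h ((sP^-1)%g i))) by rewrite E porbit_id.
by move/(orbit_unique_tree R) => /(congr1 sP); rewrite !permKV => ->.
Qed.

End RelD.

Lemma faces_conj (D : finType) (s a : {perm D}) :
  invol_fpf a -> #|porbits (a * s)%g| = nfaces s a.
Proof.
move=> Ha; have aV : (a^-1)%g = a.
  by apply/permP => x; apply: (@perm_inj _ a); rewrite permKV; case: (Ha x).
rewrite /nfaces /phi -porbitsV invMg aV.
apply: (@card_porbits_bij _ _ a) => [|x]; first by exists a => x; case: (Ha x).
by rewrite !permM.
Qed.

Definition isoP (D : finType) (s a : {perm D}) (r : D) (s' a' : {perm D}) (r' : D) :=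
  exists p : {perm D}, [/\ forall x, p (s x) = s' (p x),
                          forall x, p (a x) = a' (p x) & p r = r'].

Lemma perm_commV (D : finType) (p s s' : {perm D}) :
  (forall x, p (s x) = s' (p x)) -> forall x, p ((s^-1)%g x) = (s'^-1)%g (p x).
Proof.
by move=> H x; apply: (@perm_inj _ s'); rewrite permKV -H permKV.
Qed.

Lemma pV_comm (D : finType) (p s s' : {perm D}) :
  (forall x, p (s x) = s' (p x)) -> forall x, (p^-1)%g (s' x) = s ((p^-1)%g x).
Proof.
by move=> H x; apply: (@perm_inj _ p); rewrite permKV H permKV.
Qed.

Section Transport.
Variables (DM DP DS : finType).
Variables (sM aM : {perm DM}) (T : {set DM}) (sP aP : {perm DP}) (sS aS : {perm DS}).
Variables (h : DP -> DM) (io : DM -> DS) (nu : DP -> DS).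
Hypothesis R : cutrel sM aM T sP aP sS aS h io nu.
Variables (p sM' aM' : {perm DM}) (T' : {set DM}).
Hypothesis ps : forall x, p (sM x) = sM' (p x).
Hypothesis pa : forall x, p (aM x) = aM' (p x).
Hypothesis pT : forall x, (p x \in T') = (x \in T).

Lemma pVT x : ((p^-1)%g x \in T) = (x \in T').
Proof. by rewrite -pT permKV. Qed.

Lemma transport :
  cutrel sM' aM' T' sP aP sS aS (fun i => p (h i)) (fun y => io ((p^-1)%g y)) nu.
Proof.
case: R => hinj HT ioinj nuinj disj cov ha first aS1 aS2 aS3 sS1 sS2 sS3.
split.
- by move=> i j /perm_inj /hinj.
- move=> x; rewrite -pVT HT; split => [[i Ei]|[i <-]]; last by exists i; rewrite permK.
  by exists i; rewrite Ei permKV.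
- by move=> y y' /ioinj /perm_inj.
- exact: nuinj.
- by move=> y i; apply: disj.
- move=> z; case: (cov z) => [[y ->]|[i ->]]; last by right; exists i.
  by left; exists (p y); rewrite permK.
- by move=> i; rewrite ha pa.
- move=> i; case: (first i) => k [k0 Ek Hk]; exists k; split => //.
    by rewrite Ek (equiv_iter ps).
  by move=> j /Hk; rewrite -(equiv_iter ps) pT.
- by move=> y yT; rewrite aS1 ?pVT // (pV_comm pa).
- by move=> i; rewrite permK aS2.
- by move=> i; rewrite aS3 permK.
- move=> y yT; rewrite sS1; first by congr io; rewrite -(pV_comm ps).
  by rewrite -(pV_comm ps) pVT.
- move=> y i E; apply: sS2; by rewrite -(pV_comm ps) E permK.
- by move=> i; rewrite sS3 permK.
Qed.

End Transport.

Lemma first_unique (D : finType) (s : {perm D}) (T : {set D}) x k1 k2 :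
  0 < k1 -> iter k1 s x \in T -> (forall j, 0 < j < k1 -> iter j s x \notin T) ->
  0 < k2 -> iter k2 s x \in T -> (forall j, 0 < j < k2 -> iter j s x \notin T) ->
  k1 = k2.
Proof.
move=> p1 T1 H1 p2 T2 H2; apply/eqP; rewrite eqn_leq; apply/andP; split.
  by rewrite leqNgt; apply/negP => lt; move: (H1 k2); rewrite p2 lt T2 => /(_ isT).
by rewrite leqNgt; apply/negP => lt; move: (H2 k1); rewrite p1 lt T1 => /(_ isT).
Qed.

Section Functional.
Variables (DM DP DS : finType).
Variables (sM aM : {perm DM}) (T : {set DM}).
Variables (sP aP sP' aP' : {perm DP}) (sS aS sS' aS' : {perm DS}).
Variables (h h' : DP -> DM) (io io' : DM -> DS) (nu nu' : DP -> DS).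
Hypothesis R : cutrel sM aM T sP aP sS aS h io nu.
Hypothesis R' : cutrel sM aM T sP' aP' sS' aS' h' io' nu'.

Definition qf i := odflt i [pick j | h' j == h i].

Lemma qfE i : h' (qf i) = h i.
Proof.
rewrite /qf; case: pickP => [j /eqP //|H].
case: (Tcase R' (hT R i)) => j Ej; by move: (H j); rewrite Ej eqxx.
Qed.

Lemma qf_inj : injective qf.
Proof. by move=> i j E; apply: (cr_hinj R); rewrite -!qfE E. Qed.

Definition qperm := perm qf_inj.

Lemma qperm_s i : qperm (sP i) = sP' (qperm i).
Proof.
rewrite !permE; apply: (cr_hinj R'); rewrite qfE.
case: (cr_first R i) => k1 [p1 E1 H1]; case: (cr_first R' (qf i)) => k2 [p2 E2 H2].
rewrite qfE in E2 H2; rewrite E1 E2; congr iter.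
by apply: (first_unique p1 _ H1 p2 _ H2); [rewrite -E1; exact: (hT R) | rewrite -E2; exact: (hT R')].
Qed.

Lemma qperm_a i : qperm (aP i) = aP' (qperm i).
Proof. by rewrite !permE; apply: (cr_hinj R'); rewrite qfE (cr_ha R) (cr_ha R') qfE. Qed.

Definition rf z :=
  if [pick y | io y == z] is Some y then io' y
  else odflt z (omap (fun i => nu' (qperm i)) [pick i | nu i == z]).

Lemma rf_io y : rf (io y) = io' y.
Proof.
rewrite /rf; case: pickP => [y' /eqP /(cr_ioinj R) -> //|H].
by move: (H y); rewrite eqxx.
Qed.

Lemma rf_nu i : rf (nu i) = nu' (qperm i).
Proof.
rewrite /rf; case: pickP => [y' /eqP E|_].
  by move: (cr_disj R y' i); rewrite E eqxx.
case: pickP => [j /eqP /(cr_nuinj R) -> //|H].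
by move: (H i); rewrite eqxx.
Qed.

Lemma rf_inj : injective rf.
Proof.
move=> z w; case: (cr_cov R z) => [[y ->]|[i ->]]; case: (cr_cov R w) => [[y' ->]|[i' ->]];
  rewrite ?rf_io ?rf_nu.
- by move/(cr_ioinj R') ->.
- by move=> E; move: (cr_disj R' y (qperm i')); rewrite E eqxx.
- by move=> E; move: (cr_disj R' y' (qperm i)); rewrite E eqxx.
- by move/(cr_nuinj R')/perm_inj ->.
Qed.

Definition rperm := perm rf_inj.

Lemma functional rM rP rP' rS rS' : h rP = rM -> h' rP' = rM -> nu rP = rS -> nu' rP' = rS' ->
  isoP sP aP rP sP' aP' rP' /\ isoP sS aS rS sS' aS' rS'.
Proof.
move=> hr hr' nr nr'.
have qr : qperm rP = rP'.
  by rewrite permE; apply: (cr_hinj R'); rewrite qfE hr hr'.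
split; first by exists qperm; split => //; [exact: qperm_s | exact: qperm_a].
exists rperm; split.
- move=> z; rewrite !permE; case: (cr_cov R z) => [[y ->]|[i ->]]; last first.
    rewrite (cr_sS3 R) rf_nu rf_io (cr_sS3 R'); congr io'.
    by rewrite -(perm_commV qperm_s) /qperm permE qfE.
  rewrite rf_io; case: (boolP (sM y \in T)) => syT.
    case: (Tcase R syT) => i Ei; rewrite (cr_sS2 R Ei) rf_nu (cr_sS2 R' (i:=qperm i)) //.
    by rewrite /qperm permE qfE.
  by rewrite (cr_sS1 R syT) (cr_sS1 R' syT) rf_io.
- move=> z; rewrite !permE; case: (cr_cov R z) => [[y ->]|[i ->]]; last first.
    rewrite (cr_aS3 R) rf_nu rf_io (cr_aS3 R') -qperm_a permE qfE //.
  rewrite rf_io; case: (boolP (y \in T)) => yT.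
    case: (Tcase R yT) => i ->; rewrite (cr_aS2 R) rf_nu -[h i]qfE (cr_aS2 R').
    by rewrite qperm_a permE.
  by rewrite (cr_aS1 R yT) (cr_aS1 R' yT) rf_io.
- by rewrite permE -nr rf_nu qr nr'.
Qed.

End Functional.

Section Inj.
Variables (DM DP DS : finType).
Variables (sM aM sM' aM' : {perm DM}) (T T' : {set DM}).
Variables (sP aP sP' aP' : {perm DP}) (sS aS sS' aS' : {perm DS}).
Variables (h h' : DP -> DM) (io io' : DM -> DS) (nu nu' : DP -> DS).
Hypothesis R : cutrel sM aM T sP aP sS aS h io nu.
Hypothesis R' : cutrel sM' aM' T' sP' aP' sS' aS' h' io' nu'.
Hypothesis H1 : #|porbits (aP * sP)%g| = 1.
Variables (rP rP' : DP).
Variables (q : {perm DP}) (r : {perm DS}).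
Hypothesis qs : forall x, q (sP x) = sP' (q x).
Hypothesis qa : forall x, q (aP x) = aP' (q x).
Hypothesis qr : q rP = rP'.
Hypothesis rs : forall x, r (sS x) = sS' (r x).
Hypothesis ra : forall x, r (aS x) = aS' (r x).
Hypothesis rr : r (nu rP) = nu' rP'.

Lemma compat i : r (nu i) = nu' (q i).
Proof.
have rphi : forall z, r (phi sS aS z) = phi sS' aS' (r z).
  by move=> z; rewrite /phi !permM (perm_commV rs) ra.
apply: (@equiv_agree _ _ (fun i => r (nu i)) (fun i => nu' (q i)) (aP * sP)%g (phi sS' aS') rP).
- by move=> x; rewrite -(phiS_nu R) rphi.
- by move=> x; rewrite (phiS_nu R') permM qs qa permM.
- by rewrite rr qr.
- exact: single_orbit.
Qed.

Lemma r_io y : exists y', r (io y) = io' y'.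
Proof.
case: (cr_cov R' (r (io y))) => [[y' E]|[j E]]; first by exists y'.
have : r (io y) = r (nu ((q^-1)%g j)) by rewrite compat permKV.
by move/perm_inj => E'; move: (cr_disj R y ((q^-1)%g j)); rewrite E' eqxx.
Qed.

Definition pf y := odflt y [pick y' | io' y' == r (io y)].

Lemma pfE y : io' (pf y) = r (io y).
Proof.
rewrite /pf; case: pickP => [y' /eqP //|H].
by case: (r_io y) => y' E; move: (H y'); rewrite E eqxx.
Qed.

Lemma pf_inj : injective pf.
Proof. by move=> y z E; apply: (cr_ioinj R); apply: (@perm_inj _ r); rewrite -!pfE E. Qed.

Definition pperm := perm pf_inj.

Lemma pp_h i : pperm (h i) = h' (q i).
Proof.
rewrite /pperm permE; apply: (cr_ioinj R'); apply: (@perm_inj _ aS').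
by rewrite pfE -ra (cr_aS2 R) (cr_aS2 R') compat qa.
Qed.

Lemma pp_T y : (pperm y \in T') = (y \in T).
Proof.
case: (boolP (y \in T)) => yT.
  by case: (Tcase R yT) => i ->; rewrite pp_h (hT R').
apply/negP => /(Tcase R') [j Ej].
have : io' (pperm y) = io' (pperm (h ((q^-1)%g j))) by rewrite pp_h permKV Ej.
rewrite /pperm !permE !pfE => /perm_inj /(cr_ioinj R) E.
by move: yT; rewrite E (hT R).
Qed.

Lemma pp_a y : pperm (aM y) = aM' (pperm y).
Proof.
case: (boolP (y \in T)) => yT.
  by case: (Tcase R yT) => i ->; rewrite -(cr_ha R) !pp_h qa (cr_ha R').
have pyT : pperm y \notin T' by rewrite pp_T.
apply: (cr_ioinj R'); rewrite -(cr_aS1 R' pyT) /pperm !permE !pfE -ra (cr_aS1 R yT).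
by [].
Qed.

Lemma pp_s y : pperm (sM y) = sM' (pperm y).
Proof.
case: (boolP (sM y \in T)) => syT.
  case: (Tcase R syT) => i Ei; rewrite Ei pp_h.
  have E1 : sS' (io' (pperm y)) = nu' (q i) by rewrite /pperm permE pfE -rs (cr_sS2 R Ei) compat.
  case: (boolP (sM' (pperm y) \in T')) => sT.
    case: (Tcase R' sT) => j Ej; rewrite Ej; rewrite (cr_sS2 R' Ej) in E1.
    by rewrite ((cr_nuinj R') _ _ E1).
  by rewrite (cr_sS1 R' sT) in E1; move: (cr_disj R' (sM' (pperm y)) (q i)); rewrite E1 eqxx.
have E1 : sS' (io' (pperm y)) = io' (pperm (sM y)).
  by rewrite /pperm !permE !pfE -rs (cr_sS1 R syT).
case: (boolP (sM' (pperm y) \in T')) => sT.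
  case: (Tcase R' sT) => j Ej; rewrite (cr_sS2 R' Ej) in E1.
  by move: (cr_disj R' (pperm (sM y)) j); rewrite E1 eqxx.
by rewrite (cr_sS1 R' sT) in E1; rewrite ((cr_ioinj R') _ _ E1).
Qed.

End Inj.

Definition mkperm (D : finType) (f : D -> D) : {perm D} :=
  if injectiveP f is ReflectT H then perm H else 1%g.

Lemma mkpermE (D : finType) (f : D -> D) : injective f -> mkperm f =1 f.
Proof. by rewrite /mkperm; case: injectiveP => // H _ x; rewrite permE. Qed.

Section Enum.
Variables (D : finType) (n : nat) (T : {set D}) (x0 : D) (i0 : 'I_n).
Hypothesis HT : #|T| = n.

Definition hT_ (i : 'I_n) : D := nth x0 (enum T) i.
Definition hinv_ (x : D) : 'I_n := insubd i0 (index x (enum T)).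

Lemma size_enumT : size (enum T) = n.
Proof. by rewrite -cardE HT. Qed.

Lemma hT_mem i : hT_ i \in T.
Proof. by rewrite -mem_enum mem_nth // size_enumT. Qed.

Lemma hT_inj : injective hT_.
Proof.
move=> i j E; apply: val_inj; apply/eqP.
rewrite -(@nth_uniq _ x0 (enum T)) ?size_enumT ?enum_uniq ?ltn_ord //; by apply/eqP.
Qed.

Lemma hinvK i : hinv_ (hT_ i) = i.
Proof.
apply: val_inj; rewrite /hinv_ val_insubd index_uniq ?size_enumT ?enum_uniq //.
by rewrite ltn_ord.
Qed.

Lemma hinvK' x : x \in T -> hT_ (hinv_ x) = x.
Proof.
move=> xT; rewrite /hT_ /hinv_ val_insubd.
have -> : index x (enum T) < n by rewrite -size_enumT index_mem mem_enum.
by rewrite nth_index // mem_enum.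
Qed.

Lemma hT_onto x : x \in T -> exists i, hT_ i = x.
Proof. by move=> xT; exists (hinv_ x); apply: hinvK'. Qed.

Lemma hinv_inj x y : x \in T -> y \in T -> hinv_ x = hinv_ y -> x = y.
Proof. by move=> xT yT E; rewrite -(hinvK' xT) -(hinvK' yT) E. Qed.

End Enum.

Section FirstRet.
Variables (D : finType) (s : {perm D}) (T : {set D}).

Definition nk x := (find (fun n => iter n.+1 s x \in T) (iota 0 #|porbit s x|)).+1.
Definition fr x := iter (nk x) s x.

Lemma nk_spec x : x \in T ->
  [/\ 0 < nk x, fr x \in T & forall j, 0 < j < nk x -> iter j s x \notin T].
Proof.
move=> xT; set N := #|porbit s x|.
have N0 : 0 < N by rewrite lt0n card_porbit_neq0.
have Hhas : has (fun n => iter n.+1 s x \in T) (iota 0 N).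
  apply/hasP; exists N.-1; first by rewrite mem_iota add0n prednK // leqnn andbT.
  by rewrite prednK // iter_porbit.
have lt := Hhas; rewrite has_find size_iota in lt.
split => //.
  by have := nth_find 0 Hhas; rewrite nth_iota // add0n.
move=> j /andP [j0 jk].
have jf : j.-1 < find (fun n => iter n.+1 s x \in T) (iota 0 N).
  by move: jk; rewrite /nk -/N; case: j j0 => // j' _; rewrite ltnS.
have := before_find 0 jf.
rewrite nth_iota; last by apply: leq_trans lt; apply: ltnW.
by rewrite add0n prednK // => /negbT.
Qed.

Lemma iterp_inj n : injective (iter n s).
Proof. elim: n => [//|n IH] x y /=; by move/perm_inj/IH. Qed.

Lemma fr_inj x y : x \in T -> y \in T -> fr x = fr y -> x = y.
Proof.
move=> xT yT; case: (nk_spec xT) => p1 _ H1; case: (nk_spec yT) => p2 _ H2.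
rewrite /fr.
wlog le : x y xT yT p1 p2 H1 H2 / nk x <= nk y.
  move=> W; case: (leqP (nk x) (nk y)) => l; first exact: W.
  by move=> E; symmetry; apply: W => //; apply: ltnW.
move=> E0; have E1 : iter (nk x) s x = iter (nk x) s (iter (nk y - nk x) s y).
  by rewrite E0 -iterD subnKC.
have E := iterp_inj E1.
case: (posnP (nk y - nk x)) => [Z|P]; first by move: E; rewrite Z.
have : 0 < nk y - nk x < nk y by rewrite P; lia.
by move/H2; rewrite -E xT.
Qed.

End FirstRet.

Section Cut.
Variables (e m : nat) (i0 : 'I_(2 * m)).
Variables (M : premap (e + m)) (T : {set 'I_(2 * (e + m))}).
Local Notation sM := (sigma M).
Local Notation aM := (alpha M).
Local Notation DM := 'I_(2 * (e + m)).
Local Notation DP := 'I_(2 * m).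
Local Notation DS := 'I_(2 * (e + 2 * m)).

Lemma EqS : 2 * (e + m) + 2 * m = 2 * (e + 2 * m).
Proof. lia. Qed.

Definition cio (y : DM) : DS := cast_ord EqS (unsplit (inl y)).
Definition cnu (i : DP) : DS := cast_ord EqS (unsplit (inr i)).
Definition cdec (z : DS) := split (cast_ord (esym EqS) z).

Lemma cdec_io y : cdec (cio y) = inl y.
Proof. by rewrite /cdec /cio cast_ordK unsplitK. Qed.
Lemma cdec_nu i : cdec (cnu i) = inr i.
Proof. by rewrite /cdec /cnu cast_ordK unsplitK. Qed.

Lemma cio_inj : injective cio.
Proof. by move=> y y' E; move: (cdec_io y); rewrite E cdec_io => -[]. Qed.
Lemma cnu_inj : injective cnu.
Proof. by move=> y y' E; move: (cdec_nu y); rewrite E cdec_nu => -[]. Qed.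
Lemma c_disj y i : cio y != cnu i.
Proof. by apply/eqP => E; move: (cdec_io y); rewrite E cdec_nu. Qed.
Lemma c_cov z : (exists y, z = cio y) \/ (exists i, z = cnu i).
Proof.
have E : z = cast_ord EqS (unsplit (cdec z)) by rewrite /cdec splitK cast_ordKV.
by case: (cdec z) E => [y|i] ->; [left; exists y | right; exists i].
Qed.

Definition ch := @hT_ _ (2 * m) T (Defs.root M).
Definition chinv := hinv_ T i0.

Definition cP_a := mkperm (fun i => chinv (aM (ch i))).
Definition cP_s := mkperm (fun i => chinv (fr sM T (ch i))).

Definition cS_sf (z : DS) : DS :=
  match cdec z with
  | inl y => if sM y \in T then cnu (chinv (sM y)) else cio (sM y)
  | inr i => cio (ch ((cP_s^-1)%g i)) end.
Definition cS_af (z : DS) : DS :=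
  match cdec z with
  | inl y => if y \in T then cnu (cP_a (chinv y)) else cio (aM y)
  | inr i => cio (ch (cP_a i)) end.

Definition cS_s := mkperm cS_sf.
Definition cS_a := mkperm cS_af.

Definition cutP : premap m := Premap cP_s cP_a (chinv (Defs.root M)).
Definition cutS : premap (e + 2 * m) := Premap cS_s cS_a (cnu (chinv (Defs.root M))).

Hypothesis HT : #|T| = 2 * m.
Hypothesis Ta : forall x, x \in T -> aM x \in T.
Hypothesis Ha : invol_fpf aM.

Lemma ch_mem i : ch i \in T. Proof. exact: hT_mem. Qed.
Lemma ch_inj : injective ch. Proof. exact: hT_inj. Qed.
Lemma chK i : chinv (ch i) = i. Proof. exact: hinvK. Qed.
Lemma chK' x : x \in T -> ch (chinv x) = x. Proof. exact: hinvK'. Qed.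

Lemma cP_aE i : cP_a i = chinv (aM (ch i)).
Proof.
apply: mkpermE => i1 j E; apply: ch_inj; apply: (@perm_inj _ aM).
by rewrite -(chK' (Ta (ch_mem i1))) -(chK' (Ta (ch_mem j))) E.
Qed.

Lemma cP_sE i : cP_s i = chinv (fr sM T (ch i)).
Proof.
apply: mkpermE => i1 j E; apply: ch_inj; apply: (@fr_inj _ sM T _ _ (ch_mem i1) (ch_mem j)).
have := nk_spec sM (ch_mem i1); case=> _ Ti _.
have := nk_spec sM (ch_mem j); case=> _ Tj _.
by rewrite -(chK' Ti) -(chK' Tj) E.
Qed.

Lemma ch_a i : ch (cP_a i) = aM (ch i).
Proof. by rewrite cP_aE chK' // Ta // ch_mem. Qed.

Lemma aM_T' y : (aM y \in T) = (y \in T).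
Proof.
apply/idP/idP => [H|]; last exact: Ta.
by case: (Ha y) => _ <-; apply: Ta.
Qed.

Lemma cS_afE1 y : cS_af (cio y) = if y \in T then cnu (cP_a (chinv y)) else cio (aM y).
Proof. by rewrite /cS_af cdec_io. Qed.
Lemma cS_afE2 i : cS_af (cnu i) = cio (ch (cP_a i)).
Proof. by rewrite /cS_af cdec_nu. Qed.
Lemma cS_sfE1 y : cS_sf (cio y) = if sM y \in T then cnu (chinv (sM y)) else cio (sM y).
Proof. by rewrite /cS_sf cdec_io. Qed.
Lemma cS_sfE2 i : cS_sf (cnu i) = cio (ch ((cP_s^-1)%g i)).
Proof. by rewrite /cS_sf cdec_nu. Qed.

Lemma cS_af_inj : injective cS_af.
Proof.
move=> z w; case: (c_cov z) => [[y ->]|[i ->]]; case: (c_cov w) => [[y' ->]|[i' ->]];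
  rewrite ?cS_afE1 ?cS_afE2.
- case: (boolP (y \in T)) => yT; case: (boolP (y' \in T)) => y'T.
  + by move/cnu_inj/perm_inj => E; rewrite -(chK' yT) -(chK' y'T) E.
  + by move=> E; move: (c_disj (aM y') (cP_a (chinv y))); rewrite E eqxx.
  + by move=> E; move: (c_disj (aM y) (cP_a (chinv y'))); rewrite E eqxx.
  + by move/cio_inj/perm_inj ->.
- case: (boolP (y \in T)) => yT.
    by move=> E; move: (c_disj (ch (cP_a i')) (cP_a (chinv y))); rewrite E eqxx.
  move/cio_inj => E; move: yT; rewrite -aM_T' E ch_mem //.
- case: (boolP (y' \in T)) => yT.
    by move=> E; move: (c_disj (ch (cP_a i)) (cP_a (chinv y'))); rewrite E eqxx.
  move/cio_inj => E; move: yT; rewrite -aM_T' -E ch_mem //.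
- by move/cio_inj/ch_inj/perm_inj ->.
Qed.

Lemma cS_sf_inj : injective cS_sf.
Proof.
move=> z w; case: (c_cov z) => [[y ->]|[i ->]]; case: (c_cov w) => [[y' ->]|[i' ->]];
  rewrite ?cS_sfE1 ?cS_sfE2.
- case: (boolP (sM y \in T)) => yT; case: (boolP (sM y' \in T)) => y'T.
  + by move/cnu_inj => E; congr cio; apply: (@perm_inj _ sM); rewrite -(chK' yT) -(chK' y'T) E.
  + by move=> E; move: (c_disj (sM y') (chinv (sM y))); rewrite E eqxx.
  + by move=> E; move: (c_disj (sM y) (chinv (sM y'))); rewrite E eqxx.
  + by move/cio_inj/perm_inj ->.
- case: (boolP (sM y \in T)) => yT.
    by move=> E; move: (c_disj (ch ((cP_s^-1)%g i')) (chinv (sM y))); rewrite E eqxx.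
  by move/cio_inj => E; move: yT; rewrite E ch_mem.
- case: (boolP (sM y' \in T)) => yT.
    by move=> E; move: (c_disj (ch ((cP_s^-1)%g i)) (chinv (sM y'))); rewrite E eqxx.
  by move/cio_inj => E; move: yT; rewrite -E ch_mem.
- by move/cio_inj/ch_inj/perm_inj ->.
Qed.

Lemma cS_aE z : cS_a z = cS_af z. Proof. exact: mkpermE cS_af_inj z. Qed.
Lemma cS_sE z : cS_s z = cS_sf z. Proof. exact: mkpermE cS_sf_inj z. Qed.

Lemma cut_rel : cutrel sM aM T cP_s cP_a cS_s cS_a ch cio cnu.
Proof.
split.
- exact: ch_inj.
- move=> x; split; last by case=> i <-; apply: ch_mem.
  by move=> xT; exists (chinv x); apply: chK'.
- exact: cio_inj.
- exact: cnu_inj.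
- exact: c_disj.
- exact: c_cov.
- exact: ch_a.
- move=> i; case: (nk_spec sM (ch_mem i)) => k0 Tf Hk; exists (nk sM T (ch i)); split => //.
  by rewrite cP_sE chK'.
- by move=> y yT; rewrite cS_aE cS_afE1 (negbTE yT).
- by move=> i; rewrite cS_aE cS_afE1 ch_mem chK.
- by move=> i; rewrite cS_aE cS_afE2.
- by move=> y yT; rewrite cS_sE cS_sfE1 (negbTE yT).
- by move=> y i E; rewrite cS_sE cS_sfE1 E ch_mem chK.
- by move=> i; rewrite cS_sE cS_sfE2.
Qed.

End Cut.

Section Kappa.
Variables (A B : finType) (c : {perm A}) (p : {perm B}) (a : A) (b : B).
Hypothesis HN : #|porbit c a| = #|porbit p b|.
Local Notation N := #|porbit c a|.

Definition kap x := iter (index x (traject c a N)) p b.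



Lemma kap_iter n : kap (iter n c a) = iter n p b.
Proof.
have N0 : 0 < N by rewrite lt0n card_porbit_neq0.
have lt : n %% N < N by rewrite ltn_mod.
rewrite /kap (iter_mod c a n) -(nth_traject _ lt) index_uniq ?size_traject ?uniq_traject_porbit //.
by rewrite [in RHS](iter_mod p b n) HN.
Qed.

Lemma kap_comm x : x \in porbit c a -> kap (c x) = p (kap x).
Proof. by case/porbit_iterP' => n ->; rewrite -iterS !kap_iter. Qed.

Lemma kap_mem x : kap x \in porbit p b.
Proof. exact: iter_perm_porbit. Qed.

Lemma kap_inj x y : x \in porbit c a -> y \in porbit c a -> kap x = kap y -> x = y.
Proof.
case/porbit_iterP => n ln ->; case/porbit_iterP => n' ln' ->.
rewrite !kap_iter => E; congr iter; apply: (iter_inj_lt _ _ E); by rewrite -HN.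
Qed.

Lemma kap_onto z : z \in porbit p b -> exists2 x, x \in porbit c a & kap x = z.
Proof.
case/porbit_iterP' => n ->; exists (iter n c a); [exact: iter_perm_porbit | exact: kap_iter].
Qed.

End Kappa.

Section Glue.
Variables (e m : nat) (y0 : 'I_(2 * (e + m))).
Variables (P : premap m) (S : premap (e + 2 * m)).
Hypothesis HP : is_plane_tree P.
Hypothesis HS : is_simple_boundary_map m S.
Local Notation sP := (sigma P).
Local Notation aP := (alpha P).
Local Notation rP := (Defs.root P).
Local Notation sS := (sigma S).
Local Notation aS := (alpha S).
Local Notation rS := (Defs.root S).
Local Notation DM := 'I_(2 * (e + m)).
Local Notation DP := 'I_(2 * m).
Local Notation DS := 'I_(2 * (e + 2 * m)).
Local Notation H := (root_face S).
Local Notation cc := (aP * sP)%g.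
Local Notation ph := (phi sS aS).

Lemma aP_inv : invol_fpf aP. Proof. by case: HP => -[]. Qed.
Lemma aS_inv : invol_fpf aS. Proof. by case: HS => -[]. Qed.

Lemma cc_one : #|porbits cc| = 1.
Proof. by rewrite faces_conj; [case: HP | exact: aP_inv]. Qed.

Lemma cc_all (i : DP) : porbit cc i = setT.
Proof. by apply/setP => j; rewrite inE single_orbit // cc_one. Qed.

Lemma HN : #|porbit cc rP| = #|porbit ph rS|.
Proof.
rewrite cc_all cardsT card_ord.
by case: HS => _ HH _ _; exact: (esym HH).
Qed.

Definition gk := kap cc ph rP rS.

Lemma gk_comm x : gk (cc x) = ph (gk x).
Proof. by apply: kap_comm; [exact: HN | rewrite (cc_all rP) inE]. Qed.

Lemma gk_inj : injective gk.
Proof. by move=> x y; apply: kap_inj; [exact: HN | rewrite (cc_all rP) inE | rewrite (cc_all rP) inE]. Qed.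

Lemma gk_mem x : gk x \in H.
Proof. exact: kap_mem. Qed.

Definition gkinv z := odflt rP [pick i | gk i == z].

Lemma gkinvK z : z \in H -> gk (gkinv z) = z.
Proof.
move=> zH; rewrite /gkinv; case: pickP => [i /eqP //|Hn].
case: (kap_onto HN zH) => x _ Ex; by move: (Hn x); rewrite /gk Ex eqxx.
Qed.

Lemma gkinvK' i : gkinv (gk i) = i.
Proof. by apply: gk_inj; rewrite gkinvK // gk_mem. Qed.

Lemma HcardC : #|~: H| = 2 * (e + m).
Proof.
have := cardsC H; rewrite cardT size_enum_ord.
by case: HS => _ HH _ _; rewrite HH; lia.
Qed.

Definition gio := @hT_ _ (2 * (e + m)) (~: H) rS.
Definition gioinv := hinv_ (~: H) y0.

Lemma gio_mem y : gio y \notin H.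
Proof. by have := hT_mem rS HcardC y; rewrite inE. Qed.
Lemma gio_inj : injective gio. Proof. exact: hT_inj HcardC. Qed.
Lemma gioK y : gioinv (gio y) = y. Proof. exact: hinvK rS y0 HcardC y. Qed.
Lemma gioK' z : z \notin H -> gio (gioinv z) = z.
Proof. by move=> zH; apply: (hinvK' rS y0 HcardC); rewrite inE. Qed.

Lemma aS_out z : z \in H -> aS z \notin H.
Proof. by case: HS => _ _ _; apply. Qed.

Definition gh i := gioinv (aS (gk (aP i))).

Lemma gio_h i : gio (gh i) = aS (gk (aP i)).
Proof. by rewrite gioK' // aS_out // gk_mem. Qed.

Lemma K1 x : aS (gk x) = sS (gk (sP (aP x))).
Proof.
have := gk_comm x; rewrite permM /phi permM => ->.
by rewrite permKV.
Qed.

Lemma aP2 i : aP (aP i) = i. Proof. by case: (aP_inv i). Qed.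
Lemma aS2 z : aS (aS z) = z. Proof. by case: (aS_inv z). Qed.

Lemma gio_h' j : gio (gh j) = sS (gk (sP j)).
Proof. by rewrite gio_h K1 aP2. Qed.

Lemma gh_inj : injective gh.
Proof.
move=> i j E; have : gio (gh i) = gio (gh j) by rewrite E.
by rewrite !gio_h => /perm_inj /gk_inj /perm_inj.
Qed.

Definition gT := [set gh i | i in [set: DP]].

Lemma ghT i : gh i \in gT. Proof. exact: imset_f. Qed.

Definition gvalf (w : DS) : DM := if w \in H then gh (gkinv w) else gioinv w.
Definition gMaf y := gvalf (aS (gio y)).
Definition gMsf y := gvalf (sS (gio y)).

Lemma gvalH w : w \in H -> gvalf w = gh (gkinv w).
Proof. by rewrite /gvalf => ->. Qed.
Lemma gvalN w : w \notin H -> gvalf w = gioinv w.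
Proof. by rewrite /gvalf => /negbTE ->. Qed.

Lemma gMaf_inj : injective gMaf.
Proof.
move=> y y'; rewrite /gMaf.
case: (boolP (aS (gio y) \in H)) => Hy; case: (boolP (aS (gio y') \in H)) => Hy';
  rewrite ?(gvalH Hy) ?(gvalN Hy) ?(gvalH Hy') ?(gvalN Hy').
- move/gh_inj => E; apply: gio_inj; apply: (@perm_inj _ aS).
  by rewrite -(gkinvK Hy) -(gkinvK Hy') E.
- move=> E; have : gio (gh (gkinv (aS (gio y)))) = aS (gio y') by rewrite E gioK'.
  rewrite gio_h => /perm_inj E'; by move: (gio_mem y'); rewrite -E' gk_mem.
- move=> E; have : gio (gh (gkinv (aS (gio y')))) = aS (gio y) by rewrite -E gioK'.
  rewrite gio_h => /perm_inj E'; by move: (gio_mem y); rewrite -E' gk_mem.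
- move=> E; apply: gio_inj; apply: (@perm_inj _ aS).
  by rewrite -(gioK' Hy) -(gioK' Hy') E.
Qed.

Lemma gMsf_inj : injective gMsf.
Proof.
move=> y y'; rewrite /gMsf.
case: (boolP (sS (gio y) \in H)) => Hy; case: (boolP (sS (gio y') \in H)) => Hy';
  rewrite ?(gvalH Hy) ?(gvalN Hy) ?(gvalH Hy') ?(gvalN Hy').
- move/gh_inj => E; apply: gio_inj; apply: (@perm_inj _ sS).
  by rewrite -(gkinvK Hy) -(gkinvK Hy') E.
- move=> E; have : gio (gh (gkinv (sS (gio y)))) = sS (gio y') by rewrite E gioK'.
  rewrite gio_h' => /perm_inj E'; by move: (gio_mem y'); rewrite -E' gk_mem.
- move=> E; have : gio (gh (gkinv (sS (gio y')))) = sS (gio y) by rewrite -E gioK'.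
  rewrite gio_h' => /perm_inj E'; by move: (gio_mem y); rewrite -E' gk_mem.
- move=> E; apply: gio_inj; apply: (@perm_inj _ sS).
  by rewrite -(gioK' Hy) -(gioK' Hy') E.
Qed.

Definition gMa := mkperm gMaf.
Definition gMs := mkperm gMsf.
Lemma gMaE y : gMa y = gMaf y. Proof. exact: mkpermE gMaf_inj y. Qed.
Lemma gMsE y : gMs y = gMsf y. Proof. exact: mkpermE gMsf_inj y. Qed.

Definition glueM : premap (e + m) := Premap gMs gMa (gh rP).
Definition glueX : tdmap (e + m) := TDMap glueM gT.

Lemma gTcase y : y \in gT -> exists i, y = gh i.
Proof. by case/imsetP => i _ ->; exists i. Qed.

Lemma sector_H (x : DS) (w : DS) : x \in H -> w \in H ->
  w \in porbit sS x -> w = x.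
Proof.
move=> xH wH wo; case: HS => _ _ Hinj _.
by apply: Hinj => //; apply/eqP; rewrite eq_porbit_mem.
Qed.

Lemma glue_first i : exists k, [/\ 0 < k, gh (sP i) = iter k gMs (gh i)
             & forall j, 0 < j < k -> iter j gMs (gh i) \notin gT].
Proof.
set x0 := gio (gh i).
set L := #|porbit sS x0|.
have Ex0 : sS (gk (sP i)) = x0 by rewrite /x0 gio_h'.
have L0 : 0 < L by rewrite lt0n card_porbit_neq0.
have Lk : iter L.-1 sS x0 = gk (sP i).
  apply: (@perm_inj _ sS); rewrite Ex0 -iterS prednK //; exact: iter_porbit.
have L1 : 1 < L.
  rewrite ltn_neqAle L0 andbT; apply/negP => /eqP L1.
  by move: Lk; rewrite -L1 /= => E; move: (gio_mem (gh i)); rewrite -/x0 E gk_mem.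
set k := L.-1.
have kL : k < L by rewrite /k prednK // ?ltnSn // -ltnS prednK.
have notH : forall j, j < k -> iter j sS x0 \notin H.
  move=> j jk; apply/negP => jH.
  have : iter j sS x0 = iter k sS x0.
    rewrite /k Lk; apply: sector_H => //; first exact: gk_mem.
    by rewrite -Lk porbit_sym porbit_iter porbit_sym porbit_iter porbit_id.
  move/(iter_inj_lt (ltn_trans jk kL) kL) => E; by move: jk; rewrite E ltnn.
have Hio : forall j, j < k -> gio (iter j gMs (gh i)) = iter j sS x0.
  elim=> [//|j IH] jk.
  rewrite iterS gMsE /gMsf IH ?(ltn_trans (ltnSn j) jk) // -iterS gvalN ?notH // gioK' //.
  exact: notH.
have k0 : 0 < k by rewrite /k -ltnS prednK.
exists k; split => //.
  have : k = k.-1.+1 by rewrite prednK.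
  move=> ->; rewrite iterS gMsE /gMsf Hio ?prednK ?ltnSn // -iterS prednK //.
  by rewrite Lk gvalH ?gk_mem // gkinvK'.
move=> j /andP [j0 jk]; apply/negP => /gTcase [l El].
have : gio (iter j gMs (gh i)) = sS (gk (sP l)) by rewrite El gio_h'.
rewrite Hio // => E.
have : iter j.-1 sS x0 = gk (sP l).
  apply: (@perm_inj _ sS); by rewrite -iterS prednK.
move=> E'; move: (notH j.-1); rewrite E' gk_mem => /(_ _) H'.
have : j.-1 < k by apply: leq_ltn_trans (leq_pred _) jk.
by move/H'.
Qed.

Lemma glue_rel : cutrel gMs gMa gT sP aP sS aS gh gio gk.
Proof.
split.
- exact: gh_inj.
- move=> x; split; [by case/imsetP => i _ ->; exists i | by case=> i <-; apply: ghT].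
- exact: gio_inj.
- exact: gk_inj.
- by move=> y i; apply/eqP => E; move: (gio_mem y); rewrite E gk_mem.
- move=> z; case: (boolP (z \in H)) => zH.
    by right; exists (gkinv z); rewrite gkinvK.
  by left; exists (gioinv z); rewrite gioK'.
- by move=> i; rewrite gMaE /gMaf gio_h aS2 gvalH ?gk_mem // gkinvK'.
- exact: glue_first.
- move=> y yT; rewrite gMaE /gMaf; case: (boolP (aS (gio y) \in H)) => Hy.
    exfalso; move/negP: yT; apply; apply/imsetP; exists (aP (gkinv (aS (gio y)))) => //; apply: gio_inj.
    by rewrite gio_h aP2 gkinvK // aS2.
  by rewrite gvalN // gioK'.
- by move=> i; rewrite gio_h aS2.
- by move=> i; rewrite gio_h aP2.
- move=> y yT; rewrite gMsE /gMsf; case: (boolP (sS (gio y) \in H)) => Hy.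
    by move: yT; rewrite gMsE /gMsf gvalH // ghT.
  by rewrite gvalN // gioK'.
- move=> y i; rewrite gMsE /gMsf; case: (boolP (sS (gio y) \in H)) => Hy.
    by rewrite gvalH // => /gh_inj <-; rewrite gkinvK.
  rewrite gvalN // => E.
  have : sS (gio y) = sS (gk (sP i)) by rewrite -gio_h' -E gioK'.
  by move/perm_inj => E'; move: (gio_mem y); rewrite E' gk_mem.
- by move=> i; rewrite gio_h' permKV.
Qed.

End Glue.

Section Main.
Variables (e m : nat).
Hypothesis hm : 1 <= m.

Lemma i0_proof : 0 < 2 * m. Proof. lia. Qed.
Definition i0 : 'I_(2 * m) := Ordinal i0_proof.
Lemma y0_proof : 0 < 2 * (e + m). Proof. lia. Qed.
Definition y0 : 'I_(2 * (e + m)) := Ordinal y0_proof.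

Definition fcut (X : tdmap (e + m)) : premap m * premap (e + 2 * m) :=
  (cutP i0 (tmap X) (tset X), cutS i0 (tmap X) (tset X)).

Section Valid.
Variable X : tdmap (e + m).
Hypothesis HX : valid_tdm m X.
Local Notation M := (tmap X).
Local Notation T := (tset X).

Lemma vX_map : is_map M. Proof. by case: HX. Qed.
Lemma vX_Ha : invol_fpf (alpha M). Proof. by case: vX_map. Qed.
Lemma vX_Ta : forall x, x \in T -> alpha M x \in T. Proof. by case: HX => _ []. Qed.
Lemma vX_HT : #|T| = 2 * m. Proof. by case: HX => _ []. Qed.
Lemma vX_conn : forall x y, x \in T -> y \in T -> connect (tstep M T) x y.
Proof. by case: HX => _ []. Qed.
Lemma vX_VT : #|[set porbit (sigma M) x | x in T]| = m + 1. Proof. by case: HX => _ []. Qed.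
Lemma vX_root : Defs.root M \in T. Proof. by case: HX => _ []. Qed.

Definition RX := cut_rel i0 vX_HT vX_Ta vX_Ha.

Lemma vX_aP : invol_fpf (cP_a i0 M T). Proof. exact: invP_of_M RX vX_Ha. Qed.

Lemma vX_Pconn : mconnected (cP_s i0 M T) (cP_a i0 M T).
Proof. by apply: (P_conn_of_T RX) => x y xT yT; rewrite -tstepE; apply: vX_conn. Qed.

Lemma vX_VP : #|porbits (cP_s i0 M T)| = m.+1.
Proof. by rewrite (VP_VT RX) vX_VT addn1. Qed.

Lemma vX_FP : nfaces (cP_s i0 M T) (cP_a i0 M T) = 1.
Proof.
apply: (tree_one_face vX_aP vX_Pconn (k:=m)); last exact: vX_VP.
by rewrite card_ord.
Qed.

Lemma vX_hole : #|porbits (cP_a i0 M T * cP_s i0 M T)%g| = 1.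
Proof. by rewrite faces_conj ?vX_FP //; exact: vX_aP. Qed.

Lemma vX_P : is_plane_tree (cutP i0 M T).
Proof.
split; last exact: vX_FP.
split; [exact: vX_aP | exact: vX_Pconn |].
by rewrite /nverts vX_VP vX_FP; lia.
Qed.

Lemma vX_S : is_simple_boundary_map m (cutS i0 M T).
Proof.
have HM := vX_map; case: HM => _ cM eM.
have Hrf : root_face (cutS i0 M T) = cnu e (m:=m) @: setT.
  exact: (hole_orbit RX vX_hole).
split.
- split.
  + exact: (invS_of_M RX vX_Ha).
  + exact: (conn_cut RX cM vX_hole).
  + have V := vertex_count RX; have F := faces_count RX.
    rewrite vX_VT vX_hole card_ord in V F.
    move: eM; rewrite /nverts /nfaces in V F * => eM.
    rewrite F; move: V eM; move: #|porbits (cS_s i0 M T)| #|porbits (sigma M)| #|porbits (phi (sigma M) (alpha M))| => a b c; lia.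
- by rewrite Hrf card_imset ?cardsT ?card_ord //; exact: cnu_inj.
- rewrite Hrf => x y /imsetP [i _ ->] /imsetP [j _ ->] /= E.
  by rewrite (hole_simple RX E).
- rewrite Hrf => x /imsetP [i _ ->]; apply/imsetP => -[j _] /=.
  by rewrite (cr_aS3 RX) => E; move: (cr_disj RX (ch M T (cP_a i0 M T i)) j); rewrite E eqxx.
Qed.

Lemma vX_root_h : ch M T (chinv i0 T (Defs.root M)) = Defs.root M.
Proof. exact: (chK' i0 M vX_HT vX_root). Qed.

Lemma vX_induced : induced_tree M T (cutP i0 M T).
Proof.
exists (ch M T); split.
- exact: ch_inj vX_HT.
- move=> x; exact: (cr_T RX).
- exact: vX_root_h.
- exact: (cr_ha RX).
- move=> i; case: (cr_first RX i) => k [k0 Ek Hk]; exists k; split => //.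
    by rewrite permX.
  by move=> j /Hk; rewrite permX.
Qed.

End Valid.

Theorem main_thm :
    [/\ (forall X, valid_tdm m X ->
           is_plane_tree (fcut X).1 /\ is_simple_boundary_map m (fcut X).2),
        (forall X Y, valid_tdm m X -> valid_tdm m Y -> iso_tdm X Y ->
           iso_map (fcut X).1 (fcut Y).1 /\ iso_map (fcut X).2 (fcut Y).2),
        (forall X Y, valid_tdm m X -> valid_tdm m Y ->
           iso_map (fcut X).1 (fcut Y).1 -> iso_map (fcut X).2 (fcut Y).2 -> iso_tdm X Y),
        (forall P S, is_plane_tree P -> is_simple_boundary_map m S ->
           exists X, [/\ valid_tdm m X, iso_map (fcut X).1 P & iso_map (fcut X).2 S])
      & (forall X, valid_tdm m X -> induced_tree (tmap X) (tset X) (fcut X).1)].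
Proof.
split.
- by move=> X HX; split; [exact: vX_P | exact: vX_S].
- move=> X Y HX HY [p [ps pa pr pT]].
  have R1 := transport (RX HX) ps pa (fun x => pT x).
  have R2 := RX HY.
  apply: (functional R1 R2 (rM := Defs.root (tmap Y))) => //.
  + by rewrite vX_root_h // pr.
  + exact: vX_root_h.
- move=> X Y HX HY [q [qs qa qr]] [r [rs ra rr]].
  exists (pperm (RX HX) (RX HY) (vX_hole HX) qs qa qr rs ra rr); split.
  + exact: pp_s.
  + exact: pp_a.
  + rewrite -{1}(vX_root_h HX) pp_h qr; exact: vX_root_h.
  + by move=> x; rewrite pp_T.
- move=> P S HP HS.
  set X := glueX y0 P S.
  have RG := glue_rel y0 HP HS.
  have Hh := cc_one HP.
  have VP : #|porbits (sigma P)| = m.+1.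
    by case: HP => -[_ _ E] F; move: E; rewrite /nverts F; lia.
  have HX : valid_tdm m X.
    split.
      split.
      + apply: (invM_of_SP RG); [exact: aS_inv HS | exact: aP_inv HP].
      + apply: (conn_glue RG); by case: HS => -[].
      + have V := vertex_count RG; have F := faces_count RG.
        rewrite -(VP_VT RG) VP Hh card_ord in V F.
        case: HS => -[_ _ eS] _ _ _.
        rewrite /nverts /nfaces in eS F *; move: V F eS.
        move: #|porbits (sigma S)| #|porbits (gMs y0 P S)| #|porbits (phi (sigma S) (alpha S))| #|porbits (phi (gMs y0 P S) (gMa y0 P S))| => a b c d; lia.
    split.
    + by move=> x /(Tcase RG) [i ->]; rewrite -(cr_ha RG); apply: (hT RG).
    + by rewrite /= card_imset ?cardsT ?card_ord //; exact: gh_inj.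
    + move=> x y xT yT; rewrite tstepE; apply: (T_conn_of_P RG) => //.
      by case: HP => -[].
    + by rewrite /= -(VP_VT RG) VP addn1.
    + exact: (hT RG).
  have R1 := RX HX.
  have Egk : gk P S (Defs.root P) = Defs.root S.
    by rewrite /gk (kap_iter (HN HP HS) 0).
  case: (functional R1 RG (vX_root_h HX) (erefl _) (erefl _) Egk) => I1 I2.
  by exists X; split.
- by move=> X HX; exact: vX_induced.
Qed.

End Main.

Theorem theorem2 (e m : nat) (hm : 1 <= m) :
  exists f : tdmap (e + m) -> premap m * premap (e + 2 * m),
    [/\ (forall X, valid_tdm m X ->
           is_plane_tree (f X).1 /\ is_simple_boundary_map m (f X).2),
        (forall X Y, valid_tdm m X -> valid_tdm m Y -> iso_tdm X Y ->
           iso_map (f X).1 (f Y).1 /\ iso_map (f X).2 (f Y).2),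
        (forall X Y, valid_tdm m X -> valid_tdm m Y ->
           iso_map (f X).1 (f Y).1 -> iso_map (f X).2 (f Y).2 -> iso_tdm X Y),
        (forall P S, is_plane_tree P -> is_simple_boundary_map m S ->
           exists X, [/\ valid_tdm m X, iso_map (f X).1 P & iso_map (f X).2 S])
      & (forall X, valid_tdm m X -> induced_tree (tmap X) (tset X) (f X).1)].
Proof.
exists (fcut hm); exact: main_thm.
Qed.
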